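(* Work in the tabular setting with the definitions in the context, and assume the empirical dynamics is deterministic: there is a map $M:\mathcal S\times\mathcal A\to\mathcal S$ such that $M(s'\mid s,a)=\mathbb I[M(s,a)=s']$ for all $s,a,s'$. Define, for every $s$ appearing in $\mathcal D$, $$\pi^*(a\mid s)=\frac{1}{Z(s)}\exp\big(\alpha V(M(s,a))\big)\,\beta(a\mid s).$$ Then: (i) $\pi^*(\cdot\mid s)$ is a probability distribution on $\mathcal A$ for every $s\in\mathcal D$; (ii) both $\bar R(\pi)$ and $\bar R_1(\pi)$ attain their global maximum over all policies at $\pi=\pi^*$; (iii) $\operatorname{supp}(\pi^*(\cdot\mid s))\subseteq\operatorname{supp}(\beta(\cdot\mid s))$ for every $s\in\mathcal D$; and (iv) $N^*(\cdot\mid s)=M(\cdot\mid s,\pi^*(\cdot\mid s))$ for every $s\in\mathcal D$.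
   Context: Finite state space $\mathcal S$ and finite action space $\mathcal A$. $\mathcal D$ is a finite dataset of transitions $(s,a,s')$ (rewards irrelevant here); ''$s\in\mathcal D$'' means $s$ occurs as the first component of some transition. $\beta(a\mid s)$ is the empirical behavior policy (fraction of transitions from $s$ with action $a$). $M(s'\mid s,a)$ is the empirical dynamics model: the fraction of transitions from $(s,a)$ ending in $s'$ if $(s,a)$ occurs in $\mathcal D$, and $0$ otherwise. $N(s'\mid s)=\sum_a\beta(a\mid s)M(s'\mid s,a)$ is the empirical state-transition distribution. $V:\mathcal S\to\mathbb R$ is a fixed real function and $\alpha\ge 0$ a constant. $Z(s)=\sum_{s'}\exp(\alpha V(s'))N(s'\mid s)$ and $N^*(s'\mid s)=\frac{1}{Z(s)}\exp(\alpha V(s'))N(s'\mid s)$. A policy $\pi$ assigns a distribution $\pi(\cdot\mid s)$ on $\mathcal A$ to each state; $M(s'\mid s,\pi(\cdot\mid s)):=\sum_a\pi(a\mid s)M(s'\mid s,a)$. $\mathbb E_{(s,s')\sim\mathcal D}$ denotes the average over the transitions of $\mathcal D$ (equivalently $s$ drawn from the empirical state distribution and $s'\sim N(\cdot\mid s)$). The objectives (with $\log 0=-\infty$) are $$\bar R(\pi)=\mathbb E_{(s,s')\sim\mathcal D}\Big[\tfrac{\exp(\alpha V(s'))}{Z(s)}\log M(s'\mid s,\pi(\cdot\mid s))\Big],\qquad \bar R_1(\pi)=\mathbb E_{(s,s')\sim\mathcal D}\Big[\tfrac{\exp(\alpha V(s'))}{\exp(\alpha V(s))}\log M(s'\mid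 s,\pi(\cdot\mid s))\Big].$$ *)

(* Defs.v *)
From HB Require Import structures.
From mathcomp Require Import all_boot all_order all_algebra.
From mathcomp Require Import all_classical all_reals.
From mathcomp Require Import all_analysis.
Set Implicit Arguments. Unset Strict Implicit. Unset Printing Implicit Defensive.
Import Order.TTheory GRing.Theory Num.Theory.
Local Open Scope ring_scope.

Section Tabular.
Variables (R : realType) (S A : finType).

(* A dataset is a finite list of transitions ((s, a), s'). *)
Definition dataset := seq (S * A * S).

Implicit Types (D : dataset) (V : S -> R) (alpha : R).

(* "s \in D": s occurs as first component of some transition. *)
Definition inD D (s : S) : bool := has (fun t => t.1.1 == s) D.
Definition inDsa D (s : S) (a : A) : bool :=
  has (fun t => (t.1.1 == s) && (t.1.2 == a)) D.

Definition cnt_s D s : nat := count (fun t => t.1.1 == s) D.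
Definition cnt_sa D s a : nat := count (fun t => (t.1.1 == s) && (t.1.2 == a)) D.
Definition cnt_sas D s a s' : nat :=
  count (fun t => [&& t.1.1 == s, t.1.2 == a & t.2 == s']) D.

Definition beta D (a : A) (s : S) : R :=
  if (0 < cnt_s D s)%N then (cnt_sa D s a)%:R / (cnt_s D s)%:R else 0.

Definition Mhat D (s' : S) (s : S) (a : A) : R :=
  if (0 < cnt_sa D s a)%N then (cnt_sas D s a s')%:R / (cnt_sa D s a)%:R else 0.

Definition Nhat D (s' s : S) : R := \sum_a beta D a s * Mhat D s' s a.

Definition Zn D V alpha (s : S) : R := \sum_s' expR (alpha * V s') * Nhat D s' s.

Definition Nstar D V alpha (s' s : S) : R :=
  expR (alpha * V s') * Nhat D s' s / Zn D V alpha s.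

(* policies pi s a = pi(a | s) *)
Definition is_policy (pi : S -> A -> R) : Prop :=
  forall s, (forall a, 0 <= pi s a) /\ \sum_a pi s a = 1.

Definition Mpi D (pi : S -> A -> R) (s' s : S) : R := \sum_a pi s a * Mhat D s' s a.

(* log with log 0 = -oo (arguments here are always >= 0) *)
Definition logE (x : R) : \bar R := if 0 < x then (ln x)%:E else -oo%E.

Definition avgD D (f : S * A * S -> \bar R) : \bar R :=
  (((size D)%:R)^-1)%:E * (\sum_(t <- D) f t)%E.

Definition Rbar D V alpha (pi : S -> A -> R) : \bar R :=
  avgD D (fun t => ((expR (alpha * V t.2) / Zn D V alpha t.1.1)%:E
                     * logE (Mpi D pi t.2 t.1.1))%E).

Definition Rbar1 D V alpha (pi : S -> A -> R) : \bar R :=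
  avgD D (fun t => ((expR (alpha * V t.2) / expR (alpha * V t.1.1))%:E
                     * logE (Mpi D pi t.2 t.1.1))%E).

Definition pistar D V alpha (m : S -> A -> S) (s : S) (a : A) : R :=
  expR (alpha * V (m s a)) * beta D a s / Zn D V alpha s.

End Tabular.

Arguments beta {R S A}.
Arguments Mhat {R S A}.
Arguments Nhat {R S A}.

(* Main.v *)
Require Import Defs.
From HB Require Import structures.
From mathcomp Require Import all_boot all_order all_algebra.
From mathcomp Require Import all_classical all_reals.
From mathcomp Require Import all_analysis.
From mathcomp Require Import ring lra.
Import Order.TTheory GRing.Theory Num.Theory.
Local Open Scope ring_scope.

Section Helpers.
Variables (R : realType) (S A : finType) (D : dataset S A) (V : S -> R) (alpha : R)
  (m : S -> A -> S).
Hypothesis hdet : forall (s : S) (a : A), inDsa D s a ->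
     forall s' : S, Mhat D s' s a = (m s a == s')%:R :> R.

Lemma cnt_s_sum s : cnt_s D s = (\sum_a cnt_sa D s a)%N.
Proof.
rewrite /cnt_s /cnt_sa; elim: D => [|t D' IH] /=.
  by rewrite big1.
rewrite big_split /= IH; congr (_ + _)%N.
case: (t.1.1 == s) => /=; last by rewrite big1.
by rewrite (bigD1 t.1.2) //= eqxx big1 // => a /negbTE; rewrite eq_sym => ->.
Qed.

Lemma cnt_sas_le s a s' : (cnt_sas D s a s' <= cnt_sa D s a)%N.
Proof. by apply: sub_count => t /and3P[-> ->]. Qed.

Lemma cnt_sa_le s a : (cnt_sa D s a <= cnt_s D s)%N.
Proof. by apply: sub_count => t /andP[]. Qed.

Lemma beta_ge0 a s : 0 <= beta D a s :> R.
Proof. by rewrite /beta; case: ifP => // _; rewrite divr_ge0. Qed.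

Lemma Mhat_ge0 s' s a : 0 <= Mhat D s' s a :> R.
Proof. by rewrite /Mhat; case: ifP => // _; rewrite divr_ge0. Qed.

Lemma sum_beta s : (0 < cnt_s D s)%N -> \sum_a beta D a s = 1 :> R.
Proof.
move=> h; rewrite /beta h -mulr_suml -natr_sum -cnt_s_sum divff //.
by rewrite pnatr_eq0 -lt0n.
Qed.

Lemma betaM a s s' : beta D a s * Mhat D s' s a = beta D a s * (m s a == s')%:R :> R.
Proof.
case: (eqVneq (beta D a s : R) 0) => [E|nz]; first by rewrite E !mul0r.
rewrite hdet //; move: nz; rewrite /beta /inDsa has_count -/(cnt_sa D s a).
case: ifP => _; last by rewrite eqxx.
by apply: contraNT; rewrite -eqn0Ngt => /eqP ->; rewrite mul0r.
Qed.

Lemma sum_ind (T : finType) (x : T) (f : T -> R) : \sum_y (x == y)%:R * f y = f x.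
Proof.
rewrite (bigD1 x) //= eqxx mul1r big1 ?addr0 // => y /negbTE.
by rewrite eq_sym => ->; rewrite mul0r.
Qed.

Lemma Zn_eq s : Zn D V alpha s = \sum_a beta D a s * expR (alpha * V (m s a)).
Proof.
rewrite /Zn /Nhat.
under eq_bigr => s' _ do rewrite mulr_sumr.
rewrite exchange_big /=; apply: eq_bigr => a _.
rewrite (eq_bigr (fun s' => beta D a s * ((m s a == s')%:R * expR (alpha * V s')))); last first.
  by move=> s' _; rewrite betaM mulrCA; congr (_ * _); rewrite mulrC.
by rewrite -mulr_sumr sum_ind.
Qed.

Lemma inD_cnt s : inD D s = (0 < cnt_s D s)%N.
Proof. by rewrite /inD has_count. Qed.

Lemma Zn_gt0 s : inD D s -> 0 < Zn D V alpha s.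
Proof.
have ge : forall a, true -> 0 <= beta D a s * expR (alpha * V (m s a)).
  by move=> a _; rewrite mulr_ge0 ?beta_ge0 ?expR_ge0.
rewrite inD_cnt => /sum_beta hb; rewrite Zn_eq lt_def sumr_ge0 ?andbT //.
apply/negP => /eqP/(psumr_eq0P ge) h.
have : \sum_a beta D a s = 0 :> R.
  apply: big1 => a _; have /eqP := h a isT; rewrite mulf_eq0 (gt_eqF (expR_gt0 _)) orbF.
  by move/eqP.
by rewrite hb => /eqP; rewrite oner_eq0.
Qed.


Lemma sum_group (f : S * A * S -> R) :
  \sum_(t <- D) f t = \sum_(x : S * A * S) (count_mem x D)%:R * f x.
Proof.
elim: D => [|t D' IH].
  by rewrite big_nil big1 // => x _; rewrite mul0r.
rewrite big_cons IH /=.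
under [RHS]eq_bigr => x _ do rewrite natrD mulrDl.
rewrite big_split /=; congr (_ + _).
rewrite (bigD1 t) //= eqxx mul1r big1 ?addr0 // => x /negbTE.
by rewrite eq_sym => ->; rewrite mul0r.
Qed.

Lemma sum_group2 (h : S -> S -> R) :
  \sum_(t <- D) h t.1.1 t.2 =
  \sum_s \sum_s' (\sum_a cnt_sas D s a s')%:R * h s s'.
Proof.
rewrite sum_group.
transitivity (\sum_(sa : S * A) \sum_(s' : S) (cnt_sas D sa.1 sa.2 s')%:R * h sa.1 s').
  rewrite pair_big /=; apply: eq_bigr => -[[s a] s'] _ /=.
  congr (_%:R * _); apply: eq_count => -[[x y] z] /=.
  by rewrite !xpair_eqE andbA.
rewrite -(pair_big xpredT xpredT (fun s a => \sum_s' (cnt_sas D s a s')%:R * h s s')) /=.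
apply: eq_bigr => s _; rewrite exchange_big /=; apply: eq_bigr => s' _.
by rewrite natr_sum mulr_suml.
Qed.

Definition pst := pistar D V alpha m.

Lemma Zn_ge0 s : 0 <= Zn D V alpha s.
Proof. by rewrite Zn_eq sumr_ge0 // => a _; rewrite mulr_ge0 ?beta_ge0 ?expR_ge0. Qed.

Lemma pistar_ge0 s a : 0 <= pst s a.
Proof. by rewrite /pst /pistar divr_ge0 ?mulr_ge0 ?expR_ge0 ?beta_ge0 ?Zn_ge0. Qed.

Lemma pistar_sum s : inD D s -> \sum_a pst s a = 1.
Proof.
move=> hs; rewrite /pst /pistar -mulr_suml.
under eq_bigr => a _ do rewrite mulrC.
by rewrite -Zn_eq divff // gt_eqF // Zn_gt0.
Qed.

Lemma pistar_supp s a : pst s a != 0 -> beta D a s != 0 :> R.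
Proof.
by apply: contraNN => /eqP E; rewrite /pst /pistar E mulr0 mul0r.
Qed.

Lemma Nhat_ind s' s : Nhat D s' s = (\sum_a beta D a s * (m s a == s')%:R :> R).
Proof. by apply: eq_bigr => a _; rewrite betaM. Qed.

Lemma Nstar_Mpi s s' : Nstar D V alpha s' s = Mpi D pst s' s.
Proof.
rewrite /Nstar /Mpi Nhat_ind mulr_sumr mulr_suml; apply: eq_bigr => a _.
have -> : pst s a * Mhat D s' s a = expR (alpha * V (m s a)) * (beta D a s * Mhat D s' s a) / Zn D V alpha s by rewrite /pst /pistar; ring.
rewrite betaM.
case: (m s a =P s') => [->|_] //.
by rewrite !mulr0 !mul0r.
Qed.

Lemma Mhat_sum_le1 s a : \sum_s' Mhat D s' s a <= 1 :> R.
Proof.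
case: (boolP (inDsa D s a)) => h.
  rewrite (eq_bigr _ (fun s' _ => hdet s a h s')) (bigD1 (m s a)) //= eqxx big1 ?addr0 //.
  by move=> s' /negbTE; rewrite eq_sym => ->.
rewrite big1 ?ler01 // => s' _; rewrite /Mhat.
by move: h; rewrite /inDsa has_count -/(cnt_sa D s a) => /negbTE ->.
Qed.

Lemma Mpi_ge0 (pi : S -> A -> R) s' s : is_policy pi -> 0 <= Mpi D pi s' s.
Proof.
move=> hp; rewrite /Mpi sumr_ge0 // => a _.
by rewrite mulr_ge0 ?Mhat_ge0 //; case: (hp s).
Qed.

Lemma Mpi_sum_le1 (pi : S -> A -> R) s : is_policy pi -> \sum_s' Mpi D pi s' s <= 1.
Proof.
move=> hp; case: (hp s) => hge hsum.
rewrite /Mpi exchange_big /= -hsum; apply: ler_sum => a _.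
rewrite -mulr_sumr -[leRHS]mulr1; apply: ler_wpM2l => //; exact: Mhat_sum_le1.
Qed.

Lemma Nstar_sum s : inD D s -> \sum_s' Nstar D V alpha s' s = 1.
Proof.
move=> hs; rewrite /Nstar -mulr_suml -/(Zn D V alpha s) divff //.
by rewrite gt_eqF // Zn_gt0.
Qed.

Lemma Nhat_cnt s' s : (0 < cnt_s D s)%N ->
  Nhat D s' s = (\sum_a cnt_sas D s a s')%:R / (cnt_s D s)%:R :> R.
Proof.
move=> hc; rewrite /Nhat /beta hc natr_sum mulr_suml; apply: eq_bigr => a _.
rewrite /Mhat; case: (posnP (cnt_sa D s a)) => [E|P].
  have : (cnt_sas D s a s' <= 0)%N by rewrite -E cnt_sas_le.
  by rewrite leqn0 => /eqP ->; rewrite E /= !mul0r.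
field; by rewrite !pnatr_eq0 -!lt0n hc.
Qed.

Lemma inD_of t : t \in D -> inD D t.1.1.
Proof. by move=> tD; apply/hasP; exists t. Qed.

Lemma Nhat_pos t : t \in D -> 0 < Nhat D t.2 t.1.1 :> R.
Proof.
move=> tD; have := inD_of t tD; rewrite inD_cnt => hc.
rewrite Nhat_cnt // divr_gt0 // ?ltr0n //.
rewrite (bigD1 t.1.2) //= ltn_addr // /cnt_sas -has_count.
by apply/hasP; exists t => //; rewrite !eqxx.
Qed.

Lemma main_ineq (w : S * A * S -> R) (k : S -> R) (pi pi0 : S -> A -> R) :
  (forall s, inD D s -> 0 < k s) ->
  (forall t, t \in D -> w t = k t.1.1 * (expR (alpha * V t.2) / Zn D V alpha t.1.1)) ->
  is_policy pi -> (forall s, inD D s -> forall a, pi0 s a = pst s a) ->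
  (avgD D (fun t => ((w t)%:E * logE (Mpi D pi t.2 t.1.1))%E) <=
   avgD D (fun t => ((w t)%:E * logE (Mpi D pi0 t.2 t.1.1))%E))%E.
Proof.
move=> hk hw hpi hpi0.
pose p (t : S * A * S) := Nstar D V alpha t.2 t.1.1.
pose q (t : S * A * S) := Mpi D pi t.2 t.1.1.
have Zpos t : t \in D -> 0 < Zn D V alpha t.1.1 by move=> tD; apply: Zn_gt0; apply: inD_of.
have ppos t : t \in D -> 0 < p t.
  move=> tD; rewrite /p /Nstar divr_gt0 ?mulr_gt0 ?expR_gt0 ?Zpos //.
  exact: Nhat_pos.
have wpos t : t \in D -> 0 < w t.
  by move=> tD; rewrite hw // mulr_gt0 ?divr_gt0 ?expR_gt0 ?Zpos ?hk ?inD_of.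
have hp0 t : t \in D -> Mpi D pi0 t.2 t.1.1 = p t.
  move=> tD; rewrite /p Nstar_Mpi /Mpi; apply: eq_bigr => a _.
  by rewrite hpi0 // inD_of.
rewrite /avgD; apply: lee_wpmul2l; first by rewrite lee_fin invr_ge0 ler0n.
rewrite big_seq [X in (_ <= X)%E]big_seq.
apply: (@le_trans _ _ (\sum_(t <- D | t \in D) ((w t * (ln (p t) + (q t / p t - 1)))%:E))%E).
  apply: lee_sum => t tD; case: (ltP 0 (q t)) => hq.
    rewrite /logE -/(q t) hq -EFinM lee_fin ler_wpM2l //; first exact: ltW (wpos t tD).
    have h1 : -1 < q t / p t - 1.
      by have := divr_gt0 hq (ppos t tD); lra.
    have := le_ln1Dx h1; rewrite addrC subrK ln_div ?posrE ?ppos //.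
    by rewrite lerBlDl.
  rewrite /logE -/(q t) ltNge hq /= gt0_muleNy ?leNye // lte_fin wpos //.
rewrite [X in (_ <= X)%E](eq_bigr (fun t => (w t * ln (p t))%:E)); last first.
  by move=> t tD; rewrite hp0 // /logE ppos.
rewrite !sumEFin lee_fin.
pose H s s' := k s * (Mpi D pi s' s - Nstar D V alpha s' s) / Nhat D s' s.
rewrite (eq_bigr (fun t => w t * ln (p t) + H t.1.1 t.2)); last first.
  move=> t tD; rewrite mulrDr; congr (_ + _).
  rewrite /H hw // /q /p /Nstar.
  have := Nhat_pos t tD; have := Zpos t tD; have := expR_gt0 (alpha * V t.2).
  move=> e0 Z0 N0; field.
  by rewrite !gt_eqF.
rewrite big_split /= gerDl -big_seq sum_group2.
apply: sumr_le0 => s _.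
case: (posnP (cnt_s D s)) => [c0|cpos].
  rewrite big1 // => s' _.
  have -> : (\sum_a cnt_sas D s a s' = 0)%N.
    apply/eqP; rewrite sum_nat_eq0; apply/forallP => a; apply/implyP => _.
    by rewrite -leqn0 -c0 (leq_trans (cnt_sas_le _ _ _)) // cnt_sa_le.
  by rewrite mul0r.
have hs : inD D s by rewrite inD_cnt.
apply: (@le_trans _ _ (\sum_s' ((cnt_s D s)%:R * k s) * (Mpi D pi s' s - Nstar D V alpha s' s))).
  apply: ler_sum => s' _.
  have hX : (\sum_a cnt_sas D s a s')%:R = Nhat D s' s * (cnt_s D s)%:R :> R.
    by rewrite Nhat_cnt // divfK // pnatr_eq0 -lt0n.
  rewrite hX /H.
  have [N0|Nn0] := eqVneq (Nhat D s' s : R) 0.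
    rewrite N0 /Nstar N0 !mulr0 !mul0r subr0.
    by rewrite mulr_ge0 ?Mpi_ge0 // mulr_ge0 ?ler0n // ltW // hk.
  by rewrite le_eqVlt; apply/orP; left; apply/eqP; field.
rewrite -mulr_sumr sumrB Nstar_sum // mulr_ge0_le0 //.
  by rewrite mulr_ge0 ?ler0n // ltW // hk.
by rewrite subr_le0 Mpi_sum_le1.
Qed.

End Helpers.

Theorem proposition1 (R : realType) (S A : finType) (D : dataset S A)
  (V : S -> R) (alpha : R) (halpha : 0 <= alpha) (m : S -> A -> S)
  (hdet : forall (s : S) (a : A), inDsa D s a ->
     forall s' : S, Mhat D s' s a = (m s a == s')%:R :> R) :
  (* (i) *)
  (forall s, inD D s ->
     (forall a, 0 <= pistar D V alpha m s a) /\ \sum_a pistar D V alpha m s a = 1) /\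
  (* (ii): any policy agreeing with pi^* on the states of D maximizes both objectives *)
  (forall pi0 : S -> A -> R, is_policy pi0 ->
     (forall s, inD D s -> forall a, pi0 s a = pistar D V alpha m s a) ->
     forall pi : S -> A -> R, is_policy pi ->
       (Rbar D V alpha pi <= Rbar D V alpha pi0)%E /\
       (Rbar1 D V alpha pi <= Rbar1 D V alpha pi0)%E) /\
  (* (iii) *)
  (forall s, inD D s -> forall a, pistar D V alpha m s a != 0 -> beta (R:=R) D a s != 0) /\
  (* (iv) *)
  (forall s, inD D s -> forall s',
     Nstar D V alpha s' s = Mpi D (pistar D V alpha m) s' s).
Proof.
split; [|split; [|split]].
- move=> s hs; split; first by move=> a; exact: (@pistar_ge0 R S A D V alpha m hdet).
  exact: (@pistar_sum R S A D V alpha m hdet).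
- move=> pi0 _ hpi0 pi hpi; split.
  + apply: (@main_ineq R S A D V alpha m hdet _ (fun _ => 1)) => //.
    by move=> t _; rewrite mul1r.
  + apply: (@main_ineq R S A D V alpha m hdet _ (fun s => Zn D V alpha s / expR (alpha * V s))) => //.
    * by move=> s hs; rewrite divr_gt0 ?expR_gt0 // (@Zn_gt0 R S A D V alpha m hdet).
    * move=> t tD; have := @Zn_gt0 R S A D V alpha m hdet _ (@inD_of S A D t tD).
      have := expR_gt0 (alpha * V t.1.1) => e0 Z0; field.
      by rewrite !gt_eqF.
- move=> s _ a; exact: (@pistar_supp R S A D V alpha m).
- move=> s _ s'; exact: (@Nstar_Mpi R S A D V alpha m hdet).
Qed.
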